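(* Let $\Gamma$ be a connected $\mathbb Z$-leg-weighted graph. Then the set of cones $\{c_w : w\in W(\Gamma)\}$ is finite.
   Context: A graph consists of finite sets $V$ (vertices) and $H$ (half-edges), a map $\mathrm{end}\colon H\to V$, an involution $i$ of $H$, a genus $g\colon V\to\mathbb Z_{\ge0}$ and an integer twist $k$. Legs are fixed points of $i$; edges are pairs $\{h,i(h)\}$, $h\ne i(h)$; a directed edge is a non-leg half-edge $h$ from $\mathrm{end}(h)$ to $\mathrm{end}(i(h))$. $\mathrm{val}(v)$ is the number of non-leg half-edges at $v$, $\kappa(v)=2g(v)-2+\mathrm{val}(v)$, and $g(\Gamma)=b_1(\Gamma)+\sum_v g(v)$. A cycle is a closed walk of directed edges repeating no vertex or undirected edge. A weighting is $w\colon H\to\mathbb Z$ with $w(h)+w(i(h))=0$ for $h\ne i(h)$ and $\sum_{\mathrm{end}(h)=v}w(h)+k\kappa(v)=0$ for all $v$. A leg-weighted graph has given integer values on the legs summing to $-k(2g(\Gamma)-2)$; $W(\Gamma)$ is the set of weightings restricting to these values. For a directed edge $e$ of a cycle $\gamma$, $w_\gamma(e)$ is the value of $w$ on the half-edge of $e$ at its source. For $E$ the edge set, $c_w\subseteq\mathbb Q_{\ge0}^E$ is the cone of $t$ with $\sum_{e\in\gamma}w_\gamma(e)t(e)=0$ for every cycle $\gamma$. *)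

(* Defs.v *)
From mathcomp Require Import all_boot all_order all_algebra.
Set Implicit Arguments. Unset Strict Implicit. Unset Printing Implicit Defensive.
Import Order.TTheory GRing.Theory Num.Theory.
Local Open Scope ring_scope.

(* A graph: finite types V (vertices) and H (half-edges), endv : H -> V,
   an involution inv of H, genus gen : V -> nat, twist k : int.
   Legs are fixed points of inv. *)
Section Graph.
Variables (V H : finType) (endv : H -> V) (inv : H -> H) (gen : V -> nat) (k : int).

Definition is_leg (h : H) : bool := inv h == h.

Definition edge_of (h : H) : {set H} := [set h; inv h].

Definition edgeset : {set {set H}} := [set edge_of h | h in H & ~~ is_leg h].

Definition edgeT := {e : {set H} | e \in edgeset}.

Definition adj : rel V :=
  fun u v => [exists h, ~~ is_leg h && (endv h == u) && (endv (inv h) == v)].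

Definition connected_graph : Prop := forall u v : V, connect adj u v.

Definition n_components : nat := n_comp (connect adj) predT.

Definition betti1 : int := (#|edgeset|%:Z - #|V|%:Z + (n_components)%:Z).

Definition graph_genus : int := betti1 + \sum_(v : V) (gen v)%:Z.

Definition val (v : V) : nat := #|[set h | (endv h == v) && ~~ is_leg h]|.

Definition kappa (v : V) : int := 2 * (gen v)%:Z - 2 + (val v)%:Z.

Definition leg_weighted (lw : H -> int) : Prop :=
  \sum_(h | is_leg h) lw h = - (k * (2 * graph_genus - 2)).

Definition weighting (w : H -> int) : Prop :=
  (forall h, ~~ is_leg h -> w h + w (inv h) = 0) /\
  (forall v : V, \sum_(h | endv h == v) w h + k * kappa v = 0).

Definition in_W (lw : H -> int) (w : H -> int) : Prop :=
  weighting w /\ forall h, is_leg h -> w h = lw h.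

(* A cycle: a nonempty closed walk of directed edges (non-leg half-edges)
   h_1, ..., h_n, where h_j goes from endv h_j to endv (inv h_j), with
   endv (inv h_j) = endv h_{j+1} (indices cyclic), repeating no vertex and no
   undirected edge. *)
Definition is_cycle (c : seq H) : Prop :=
  if c is h0 :: _ then
    [/\ all (fun h => ~~ is_leg h) c,
        forall j, (j < size c)%N ->
          endv (inv (nth h0 c j)) = endv (nth h0 c (j.+1 %% size c)),
        uniq (map endv c)
      & uniq (map edge_of c)]
  else False.

(* value of t : Q^E at the edge of a half-edge (0 off edges, never used on cycles) *)
Definition tval (t : edgeT -> rat) (h : H) : rat :=
  oapp t 0 (insub (edge_of h) : option edgeT).

Definition cone (w : H -> int) (t : edgeT -> rat) : Prop :=
  (forall e, 0 <= t e) /\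
  (forall c, is_cycle c -> \sum_(h <- c) (w h)%:~R * tval t h = 0).

End Graph.

(* Main.v *)
Require Import Defs.
From mathcomp Require Import all_boot all_order all_algebra zify.
Import Order.TTheory GRing.Theory Num.Theory.
Set Implicit Arguments. Unset Strict Implicit. Unset Printing Implicit Defensive.
Local Open Scope ring_scope.

Lemma mod2 (i n : nat) : (i < n)%N -> (i = (i.+2 %% n))%N -> (n <= 2)%N.
Proof.
move=> lt E. case: (leqP n 2) => // n3. case: (ltnP i.+2 n) => h. rewrite modn_small in E; lia.
have E' : (i.+2 %% n = i.+2 - n)%N.
  rewrite -[in LHS](subnK h) modnDr modn_small //; clear E; lia.
rewrite E' in E; lia.
Qed.

Lemma rot_nth (T : Type) (d a : T) (s : seq T) j : (j < (size s).+1)%N ->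
  nth d (rcons s a) j = nth d (a :: s) (j.+1 %% (size s).+1).
Proof.
move=> lt; rewrite nth_rcons; case: (ltngtP j (size s)) => h.
- by rewrite modn_small.
- lia.
- by rewrite h modnn.
Qed.

Section Proof.
Variables (V H : finType) (endv : H -> V) (inv : H -> H) (inv_invol : involutive inv)
  (gen : V -> nat) (k : int) (lw : H -> int).

Notation leg := (is_leg inv).
Notation tv := (@Defs.tval H inv).

Lemma leg_inv h : leg (inv h) = leg h.
Proof. by rewrite /is_leg inv_invol eq_sym. Qed.

Lemma edge_of_inv h : edge_of inv (inv h) = edge_of inv h.
Proof. by rewrite /edge_of inv_invol setUC. Qed.

Lemma tval_inv t h : tv t (inv h) = tv t h.
Proof. by rewrite /Defs.tval edge_of_inv. Qed.

Lemma tval_ge0 t : (forall e, 0 <= t e) -> forall h, 0 <= tv t h.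
Proof. by move=> Ht h; rewrite /Defs.tval; case: insub => [e|] //=. Qed.

Lemma edge_eq h h' : edge_of inv h = edge_of inv h' -> h' = h \/ h' = inv h.
Proof.
move=> E. have : h' \in edge_of inv h by rewrite E /edge_of !inE eqxx.
by rewrite /edge_of !inE => /orP [] /eqP; auto.
Qed.

Lemma cycle_ok (c : seq H) x0 :
  all (fun h => ~~ leg h) c -> uniq (map endv c) ->
  (forall j, (j < size c)%N -> endv (inv (nth x0 c j)) = endv (nth x0 c (j.+1 %% size c))) ->
  uniq (map (edge_of inv) c) \/ exists a, c = [:: a; inv a].
Proof.
move=> Hl Hu Hn.
have Uc : uniq c by move: Hu; apply: map_uniq.
case Hh: (has (fun a => inv a \in c) c); last first.
  left; rewrite map_inj_in_uniq // => a b ac bc E.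
  case: (edge_eq E) => // Eb; move/negbT/hasPn: Hh => /(_ a ac) /=.
  by rewrite -Eb bc.
right; move/hasP: Hh => [a ac iac].
have ilt : (index a c < size c)%N by rewrite index_mem.
have jlt : (index (inv a) c < size c)%N by rewrite index_mem.
have Ei : nth x0 c (index a c) = a := nth_index x0 ac.
have Ej : nth x0 c (index (inv a) c) = inv a := nth_index x0 iac.
have n0 : (0 < size c)%N by lia.
have Hs : forall p q, (p < size c)%N -> (q < size c)%N ->
    endv (nth x0 c p) = endv (nth x0 c q) -> p = q.
  move=> p q pl ql E; apply/eqP.
  have pl' : (p < size (map endv c))%N by rewrite size_map.
  have ql' : (q < size (map endv c))%N by rewrite size_map.
  by rewrite -(nth_uniq (endv x0) pl' ql' Hu) !(nth_map x0) // E.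
have Hj : index (inv a) c = ((index a c).+1 %% size c)%N.
  apply: Hs => //; first by rewrite ltn_pmod.
  by rewrite -Hn // Ei Ej.
have Hi : index a c = ((index (inv a) c).+1 %% size c)%N.
  apply: Hs => //; first by rewrite ltn_pmod.
  by rewrite -Hn // Ei Ej inv_invol.
have Hi2 : index a c = ((index a c).+2 %% size c)%N.
  by rewrite {1}Hi Hj -addn1 modnDml addn1.
have n2 := mod2 ilt Hi2.
have aa : inv a != a by have := allP Hl a ac.
have ij : index a c != index (inv a) c.
  by apply: contra aa => /eqP E; rewrite -Ej -E Ei.
move: Ei Ej ij ilt jlt n2 aa; move: (index a c) (index (inv a) c) => i j.
case: c {Hl Hu Hn Uc ac iac Hs Hj Hi Hi2 n0} => [|x [|y [|z s]]] //=; try lia.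
case: i => [|[|i]]; case: j => [|[|j]] //=; try lia.
- move=> -> -> _ _ _ _ _. by exists a.
- move=> -> -> _ _ _ _ _. by exists (inv a); rewrite inv_invol.
Qed.

Definition rr (good : pred H) : rel V :=
  fun x y => [exists h, [&& good h, endv h == x & endv (inv h) == y]].

Lemma lift good x p : path (rr good) x p ->
  exists hs, [/\ all good hs, map endv hs = belast x p & map (fun h => endv (inv h)) hs = p].
Proof.
elim: p x => [|y p IH] x /=; first by exists [::].
move=> /andP [/existsP [h /and3P [g /eqP e1 /eqP e2]] Hp].
have [hs [G1 G2 G3]] := IH y Hp.
by exists (h :: hs) => /=; rewrite g G1 e1 G2 e2 G3.
Qed.

Lemma mk_cycle h0 hs v p :
  endv (inv h0) = v -> endv h0 = last v p ->
  map endv hs = belast v p -> map (fun h => endv (inv h)) hs = p -> uniq (v :: p) ->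
  (forall j, (j < size (h0::hs))%N ->
     endv (inv (nth h0 (h0::hs) j)) = endv (nth h0 (h0::hs) (j.+1 %% size (h0::hs))))
  /\ uniq (map endv (h0::hs)).
Proof.
move=> E1 E2 E3 E4 Hu.
have sz : size hs = size p by rewrite -E4 size_map.
have Sm : map endv (h0 :: hs) = last v p :: belast v p by rewrite /= E2 E3.
have Tm : map (fun h => endv (inv h)) (h0 :: hs) = rcons (belast v p) (last v p).
  by rewrite /= E1 E4 -lastI.
split.
- move=> j lt.
  have lt1 : (j.+1 %% size (h0 :: hs) < size (h0 :: hs))%N by rewrite ltn_pmod.
  rewrite -(nth_map h0 (endv (inv h0)) (fun h => endv (inv h)) lt) Tm.
  rewrite -(nth_map h0 (endv h0) endv lt1) Sm.
  rewrite rot_nth; last by rewrite size_belast -sz.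
  rewrite size_belast /= sz. apply: set_nth_default. rewrite /= size_belast.
  by move: lt1; rewrite /= sz.
- rewrite Sm. move: Hu; rewrite lastI rcons_uniq /= => ->. done.
Qed.

Definition Bz : int :=
  \sum_(x : V) `|k * kappa endv inv gen x| + \sum_(h | leg h) `|lw h|.

Lemma Bz_ge0 : 0 <= Bz.
Proof. by rewrite addr_ge0 // sumr_ge0. Qed.

Lemma fin_arith (a1 a2 a3 K SK w : int) : a1 <= a2 -> a1 + (0 + a3) + K = 0 ->
  a3 <= - w -> K <= SK -> SK + a2 < w -> False.
Proof. lia. Qed.

Lemma sum_sub_abs (I : finType) (P Q : pred I) (f : I -> int) :
  (forall i, P i -> Q i) -> \sum_(i | P i) f i <= \sum_(i | Q i) `|f i|.
Proof.
move=> PQ; rewrite big_mkcond [X in _ <= X]big_mkcond; apply: ler_sum => i _.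
case Pi: (P i); first by rewrite PQ // ler_norm.
by case: (Q i).
Qed.

Lemma bound w t h0 : in_W endv inv gen k lw w -> cone endv w t -> ~~ leg h0 ->
  tv t h0 != 0 -> w h0 <= Bz.
Proof.
move=> [[Hinv Hv] Hleg] [Ht Hcyc] nl0 t0.
rewrite leNgt; apply/negP => Hbig.
have w0 : 0 < w h0 by apply: le_lt_trans Bz_ge0 Hbig.
have wi : forall h, ~~ leg h -> w (inv h) = - w h.
  by move=> h nl; apply/eqP; rewrite -addr_eq0 addrC Hinv.
have tpos : forall h, 0 <= tv t h := tval_ge0 Ht.
pose good := fun h => ~~ leg h && ((tv t h == 0) || (0 < w h)).
pose r := rr good.
pose U := [set x | connect r (endv (inv h0)) x].
have uU : endv h0 \notin U.
  rewrite inE; apply/negP => /connectP [p0 Hp0 Hl0].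
  case: (shortenP Hp0) Hl0 => p Hp Hu _ Hl.
  have [hs [G1 G2 G3]] := lift Hp.
  have [Hnth Hun] := mk_cycle (erefl _) Hl G2 G3 Hu.
  have Hnl : all (fun h => ~~ leg h) (h0 :: hs).
    rewrite /= nl0 /=; apply/allP => h hin.
    by have /andP [] := allP G1 h hin.
  have Hcy : is_cycle endv inv (h0 :: hs).
    split => //.
    case: (cycle_ok Hnl Hun Hnth) => // [[a [Ea Eb]]].
    move: G1; rewrite Eb -Ea /= andbT /good leg_inv nl0 tval_inv (negbTE t0) /=.
    by rewrite wi // oppr_gt0 ltNge (ltW w0).
  have := Hcyc _ Hcy; rewrite big_cons => /eqP; apply/negP; rewrite gt_eqF //.
  apply: (@lt_le_trans _ _ ((w h0)%:~R * tv t h0)).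
    by rewrite mulr_gt0 // ?ltr0z // lt_def t0 tpos.
  rewrite lerDl big_seq; apply: sumr_ge0 => h hin.
  have /andP [_ /orP [/eqP -> | wp]] := allP G1 h hin; first by rewrite mulr0.
  by rewrite mulr_ge0 // ler0z ltW.
have vU : endv (inv h0) \in U by rewrite inE connect0.
have closed : forall h, endv h \in U -> good h -> endv (inv h) \in U.
  move=> h; rewrite !inE => hU g; apply: (connect_trans hU); apply: connect1.
  by apply/existsP; exists h; rewrite g !eqxx.
have E1 : \sum_(x in U) (\sum_(h | endv h == x) w h + k * kappa endv inv gen x) = 0.
  by apply: big1 => x _; exact: Hv.
rewrite big_split /= in E1.
have E2 : \sum_(x in U) \sum_(h | endv h == x) w h = \sum_(h | endv h \in U) w h.
  rewrite [RHS](partition_big endv (mem U)) //=.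
  apply: eq_bigr => x xU; apply: eq_bigl => h.
  by case: eqP => [->|]; rewrite ?xU ?andbF.
have E3 : \sum_(h | endv h \in U) w h = \sum_(h | (endv h \in U) && leg h) w h +
   (\sum_(h | (endv h \in U) && ~~ leg h && (endv (inv h) \in U)) w h +
    \sum_(h | (endv h \in U) && ~~ leg h && ~~ (endv (inv h) \in U)) w h).
  by rewrite (bigID leg) /=; congr (_ + _); rewrite (bigID (fun h => endv (inv h) \in U)).
rewrite E2 E3 in E1.
have I0 : \sum_(h | (endv h \in U) && ~~ leg h && (endv (inv h) \in U)) w h = 0.
  set S := (X in X = 0).
  have : S = - S.
    rewrite {1}/S (reindex_inj (inv_inj inv_invol)) /= -sumrN.
    apply: eq_big => h; first by rewrite inv_invol leg_inv; case: (endv h \in U); case: (endv (inv h) \in U); rewrite ?andbF ?andbT.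

    by rewrite inv_invol => /andP [/andP [_ nl] _]; rewrite wi // -leg_inv.
  lia.
have X0 : \sum_(h | (endv h \in U) && ~~ leg h && ~~ (endv (inv h) \in U)) w h <= - w h0.
  rewrite (bigD1 (inv h0)) /=; last by rewrite vU leg_inv nl0 inv_invol uU.
  rewrite wi // gerDl; apply: sumr_le0 => h /andP [/andP [/andP [hU nl] niU] _].
  have : ~~ good h by apply: contra niU; exact: closed hU.
  by rewrite /good nl /= negb_or => /andP [_]; rewrite -leNgt.
have L0 : \sum_(h | (endv h \in U) && leg h) w h <= \sum_(h | leg h) `|lw h|.
  rewrite (eq_bigr lw); first by apply: sum_sub_abs => h /andP [].
  by move=> h /andP [_ l]; exact: Hleg.
have K0 : \sum_(x in U) k * kappa endv inv gen x <= \sum_(x : V) `|k * kappa endv inv gen x|.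
  exact: sum_sub_abs.
move: Hbig; rewrite /Bz I0 in E1 *; exact: (fin_arith L0 E1 X0 K0).
Qed.

Lemma bound_abs w t h0 : in_W endv inv gen k lw w -> cone endv w t -> ~~ leg h0 ->
  tv t h0 != 0 -> `|w h0| <= Bz.
Proof.
move=> Hw Hc nl t0.
have b1 := bound Hw Hc nl t0.
have b2 : w (inv h0) <= Bz by apply: (bound Hw Hc); rewrite ?leg_inv ?tval_inv.
have : w (inv h0) = - w h0.
  by apply/eqP; rewrite -addr_eq0 addrC (Hw.1.1 h0 nl).
move=> e; rewrite e in b2; rewrite ler_norml; lia.
Qed.

Definition key (w : H -> int) : {ffun H -> option 'I_(absz Bz).*2.+1} :=
  [ffun h => if `|w h| <= Bz then Some (inord (absz (w h + Bz))) else None].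

Lemma key_cone w1 w2 (t : edgeT inv -> rat) : in_W endv inv gen k lw w1 -> key w1 = key w2 ->
  cone endv w1 t -> cone endv w2 t.
Proof.
move=> W1 K C1; have [Ht Hc] := C1; split => // c Hcy.
apply: etrans (Hc c Hcy); apply: eq_big_seq => h hc.
have nl : ~~ leg h.
  by move: Hcy hc; case: c => // h1 c' [Hall _ _ _] hc; exact: (allP Hall).
case: (eqVneq (tv t h) 0) => [-> | tz]; first by rewrite !mulr0.
have b1 := bound_abs W1 C1 nl tz.
have Kh : key w1 h = key w2 h by rewrite K.
move: Kh; rewrite !ffunE b1.
have B0 := Bz_ge0.
case: ifP => // b2 [] /(congr1 val) /=; rewrite !inordK; try lia.
by move=> E; have -> : w1 h = w2 h by lia.
Qed.

End Proof.

Theorem lemma3p8 (V H : finType) (endv : H -> V) (inv : H -> H)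
    (inv_invol : involutive inv) (gen : V -> nat) (k : int) (lw : H -> int)
    (Hconn : connected_graph endv inv)
    (Hlw : leg_weighted endv inv gen k lw) :
  exists (n : nat) (cs : 'I_n -> ((edgeT inv -> rat) -> Prop)),
    forall w : H -> int, in_W endv inv gen k lw w ->
      exists i : 'I_n, forall t, @cone V H endv inv w t <-> cs i t.
Proof.
exists #|{: {ffun H -> option 'I_(absz (Bz endv inv gen k lw)).*2.+1}}|.
exists (fun i t => exists w', [/\ in_W endv inv gen k lw w',
           key endv inv gen k lw w' = enum_val i & cone endv w' t]).
move=> w Hw; exists (enum_rank (key endv inv gen k lw w)) => t; split.
  by move=> Hc; exists w; rewrite enum_rankK.
case=> w' [Hw' Ek Hc']; apply: (key_cone inv_invol Hw') => //.
by rewrite Ek enum_rankK.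
Qed.
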